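(* Let $k>1$ be an integer with $k\in\mathcal C_1$. Then $$2^k-1<a_k<2^{k+1}-1.$$ In particular $c_k/2^k\to0$ as $k\to\infty$ through $\mathcal C_1$. Furthermore, let $t_k$ be the multiplicative order of $2$ modulo $k$ and let $j_0\in\{0,1,\ldots,t_k-1\}$ be the (unique) integer with $2^{k+1}-1\equiv 2^{j_0}\pmod k$; put $s=\lfloor (k-1-j_0)/t_k\rfloor$ and $j_1=j_0+st_k$. Then $$a_k=2^{k+1}-1-2^{j_1}.$$
   Context: For a positive integer $k$, $a_k$ is the smallest positive multiple of $k$ whose sum of binary digits equals $k$, and $c_k=a_k/k$. For a positive integer $m$, $\mathcal C_m$ is the set of odd positive integers $k$ for which there exist integers $0\le j_1<j_2<\cdots<j_m\le m+k-2$ with $2^{k+m}-1\equiv \sum_{i=1}^m 2^{j_i}\pmod k$. *)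

(* Defs.v *)
From HB Require Import structures.
From mathcomp Require Import all_boot all_order all_algebra.
Set Implicit Arguments. Unset Strict Implicit. Unset Printing Implicit Defensive.
Import Order.TTheory GRing.Theory Num.Theory.

(* Sum of binary digits of n: bit i of n is odd (n %/ 2^i); bits i >= n vanish
   since n < 2^n. *)
Definition binsum (n : nat) : nat := \sum_(i < n) odd (n %/ 2 ^ i).

Definition is_a (k a : nat) : Prop :=
  [/\ 0 < a, k %| a, binsum a = k &
      forall b, 0 < b -> k %| b -> binsum b = k -> a <= b].

Definition inC (m k : nat) : Prop :=
  [/\ odd k, 0 < k &
      exists j : seq nat,
        [/\ size j = m, sorted ltn j, all (fun x => x <= m + k - 2) j &
            2 ^ (k + m) - 1 = \sum_(x <- j) 2 ^ x %[mod k]]].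

Definition is_order2 (k t : nat) : Prop :=
  [/\ 0 < t, 2 ^ t = 1 %[mod k] &
      forall u, 0 < u -> 2 ^ u = 1 %[mod k] -> t <= u].

(* Main.v *)
Require Import Defs.
From HB Require Import structures.
From mathcomp Require Import all_boot all_order all_algebra.
Import Order.TTheory GRing.Theory Num.Theory.
From Stdlib Require Import Lia.
Ltac nlia :=
  repeat match goal with H : is_true (_ <= _) |- _ => move/ssrnat.leP: H => H end;
  try (apply/ssrnat.leP);
  repeat match goal with H : (_ <= _)%coq_nat |- _ => revert H | H : @eq nat _ _ |- _ => revert H | H : ~ (@eq nat _ _) |- _ => revert H end;
  rewrite -?minusE -?plusE -?multE; intros; lia.

Definition bs (m n : nat) : nat := \sum_(i < m) odd (n %/ 2 ^ i).

Lemma bsS m n : bs m.+1 n = odd n + bs m n./2.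
Proof.
rewrite /bs big_ord_recl /= expn0 divn1; congr (_ + _).
by apply: eq_bigr => i _; rewrite /bump /= add1n expnS divnMA divn2.
Qed.

Lemma bs0 m : bs m 0 = 0.
Proof. by rewrite /bs big1 // => i _; rewrite div0n. Qed.

Lemma bs_widen m d n : n < 2 ^ m -> bs (m + d) n = bs m n.
Proof.
move=> Hn; elim: d => [|d IH]; first by rewrite addn0.
rewrite addnS /bs big_ord_recr /= -/(bs _ _) IH divn_small ?addn0 //.
apply: leq_trans Hn _; apply: leq_pexp2l => //; exact: leq_addr.
Qed.

Lemma binsumE m n : n < 2 ^ m -> binsum n = bs m n.
Proof.
move=> Hm; rewrite /binsum -/(bs n n).
have Hn : n < 2 ^ n by apply: ltn_expl.
case: (leqP m n) => H.
  by rewrite -(@bs_widen m (n - m) n Hm) subnKC.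
by rewrite -(@bs_widen n (m - n) n Hn) subnKC // ltnW.
Qed.

Lemma bs_low m n : 2 ^ bs m n <= n.+1.
Proof.
elim: m n => [|m IH] n; first by rewrite /bs big_ord0.
rewrite bsS expnD.
have := IH n./2; have := odd_double_half n.
case: (odd n) => /= E H.
  rewrite expn1; have := leq_mul (leqnn 2) H; rewrite -mul2n in E; move=> H2; nlia.
rewrite expn0 mul1n; rewrite -mul2n in E; nlia.
Qed.

Lemma bs_small m n : n < 2 ^ m ->
  (bs m n = 0 -> n = 0) /\ (bs m n = 1 -> exists j, n = 2 ^ j).
Proof.
elim: m n => [|m IH] n Hn.
  by move: Hn; rewrite expn0 ltnS leqn0 => /eqP ->; split => // H; rewrite /bs big_ord0 in H.
have Hh : n./2 < 2 ^ m.
  move: Hn; rewrite -{1}(odd_double_half n) expnS -mul2n => H; nlia.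
have [IH0 IH1] := IH _ Hh.
rewrite bsS; have E := odd_double_half n; case: (odd n) E => /= E.
  split => // H; exists 0; rewrite -E IH0 //; by case: H.
split.
  by move/IH0 => H0; rewrite -E H0.
move/IH1 => [j Hj]; exists j.+1; rewrite -E Hj expnS add0n -mul2n //.
Qed.

Lemma bs_pow m j : j < m -> bs m (2 ^ j) = 1.
Proof.
elim: m j => [|m IH] [|j] //= H.
  by rewrite bsS expn0 /= bs0.
rewrite bsS expnS oddM /= mul2n doubleK; exact: IH.
Qed.

Lemma bs_compl m n : n < 2 ^ m -> bs m (2 ^ m - 1 - n) + bs m n = m.
Proof.
elim: m n => [|m IH] n Hn.
  by move: Hn; rewrite expn0 ltnS leqn0 => /eqP ->; rewrite bs0.
set b := odd n; set h := n./2.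
have En : n = b + h.*2 by rewrite odd_double_half.
have Hh : h < 2 ^ m.
  move: Hn; rewrite En expnS -!mul2n => H; nlia.
have Ec : 2 ^ m.+1 - 1 - n = (~~ b) + (2 ^ m - 1 - h).*2.
  rewrite En expnS -!mul2n; case: (b) => /=; nlia.
rewrite Ec !bsS half_bit_double oddD odd_double -/b -/h addbF oddb.
have := IH _ Hh; clearbody b h; case: b Ec En => /= Ec En H; nlia.
Qed.

Lemma mod_cancel k a x y : coprime k a -> a * x = a * y %[mod k] -> x = y %[mod k].
Proof.
move=> Hc.
wlog Hxy : x y / y <= x => [W|].
  case: (leqP y x) => H E; first exact: W.
  by apply/esym; apply: W; [exact: ltnW | exact/esym].
move=> /eqP; rewrite eqn_mod_dvd ?leq_mul2l ?Hxy ?orbT // -mulnBr Gauss_dvdr //.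
by rewrite -eqn_mod_dvd // => /eqP.
Qed.

Lemma pow1_mod k a v : 2 ^ a = 1 %[mod k] -> 2 ^ (a * v) = 1 %[mod k].
Proof.
by move=> H; rewrite expnM -modnXm H modnXm exp1n.
Qed.

Lemma pow_gcd k a b : 0 < a -> 2 ^ a = 1 %[mod k] -> 2 ^ b = 1 %[mod k] ->
  2 ^ gcdn a b = 1 %[mod k].
Proof.
move=> Ha Hpa Hpb; have [u _ /dvdnP [v Hv]] := Bezoutl b Ha.
have E1 : 2 ^ (gcdn a b + u * b) = 1 %[mod k] by rewrite Hv mulnC (@pow1_mod k a v Hpa).
rewrite expnD -modnMmr (mulnC u b) (@pow1_mod k b u Hpb) modnMmr muln1 in E1.
exact: E1.
Qed.

Lemma no_div k : odd k -> 1 < k -> ~~ (k %| 2 ^ k - 1).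
Proof.
move=> Hodd Hk; apply/negP => Hd.
set p := pdiv k.
have pP : prime p by apply: pdiv_prime.
have pk : p %| k by apply: pdiv_dvd.
have p2 : 2 < p.
  rewrite ltn_neqAle prime_gt1 // andbT; apply/negP => /eqP E.
  by rewrite -E dvdn2 Hodd in pk.
have Hpk : 2 ^ k = 1 %[mod p].
  apply/eqP; rewrite eqn_mod_dvd ?expn_gt0 //; exact: dvdn_trans pk Hd.
have Hcop : coprime p 2 by rewrite prime_coprime // dvdn_prime2 // ?gtn_eqF.
have Hpm : 2 ^ p.-1 = 1 %[mod p].
  apply: (@mod_cancel p 2) => //; rewrite muln1 -expnS prednK ?prime_gt0 //.
  exact: fermat_little.
have p1 : 0 < p.-1 by rewrite -ltnS prednK ?prime_gt0 ?prime_gt1.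
have Hg := @pow_gcd p _ k p1 Hpm Hpk.
set g := gcdn p.-1 k in Hg.
have g0 : 0 < g by rewrite gcdn_gt0 p1.
case: (ltnP 1 g) => g1.
  have H1 : p <= g by apply: pdiv_min_dvd => //; apply: dvdn_gcdr.
  have H2 : g <= p.-1 by apply: dvdn_leq => //; apply: dvdn_gcdl.
  move: (leq_trans H1 H2); rewrite -ltnS prednK ?prime_gt0 // ltnn //.
have E1 : g = 1 by apply/eqP; rewrite eqn_leq g1 g0.
move: Hg; rewrite E1; rewrite expn1 !modn_small //; exact: ltnW.
Qed.

Lemma pow_shift k t x q : 2 ^ t = 1 %[mod k] -> 2 ^ (x + q * t) = 2 ^ x %[mod k].
Proof.
move=> H; rewrite expnD -modnMmr (mulnC q t) (@pow1_mod k t q H) modnMmr muln1 //.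
Qed.

Lemma per k t j0 i : odd k -> is_order2 k t -> j0 < t ->
  2 ^ i = 2 ^ j0 %[mod k] -> i %% t = j0.
Proof.
move=> Hodd [t0 Ht Hmin] Hj0 Hi.
set r := i %% t.
have Hr : 2 ^ r = 2 ^ j0 %[mod k].
  by rewrite -Hi (divn_eq i t) addnC (@pow_shift k t _ _ Ht).
have rt : r < t by rewrite ltn_mod.
have cop x : coprime k (2 ^ x) by apply: coprimeXr; rewrite coprimen2.
case: (ltngtP r j0) => // H.
- have E : 2 ^ j0 = 2 ^ r * 2 ^ (j0 - r) by rewrite -expnD subnKC // ltnW.
  have : 1 = 2 ^ (j0 - r) %[mod k].
    by apply: (@mod_cancel k (2 ^ r)) => //; rewrite muln1 -E.
  have Hp : 0 < j0 - r by rewrite subn_gt0.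
  move/esym/(Hmin _ Hp) => Hle; nlia.
- have E : 2 ^ r = 2 ^ j0 * 2 ^ (r - j0) by rewrite -expnD subnKC // ltnW.
  have : 1 = 2 ^ (r - j0) %[mod k].
    by apply: (@mod_cancel k (2 ^ j0)) => //; rewrite muln1 -E.
  have Hp : 0 < r - j0 by rewrite subn_gt0.
  move/esym/(Hmin _ Hp) => Hle; nlia.
Qed.

Lemma inC1 k : inC 1 k -> [/\ odd k, 0 < k &
  exists j, j <= k - 1 /\ 2 ^ k.+1 - 1 = 2 ^ j %[mod k]].
Proof.
case=> Ho Hk [[|x [|y s]] [//= _ Hall Hm]].
split => //; exists x; move: Hall Hm; rewrite /= andbT => Hx Hm.
move: p; rewrite big_cons big_nil addn0 addn1 => Hp; split => //; nlia.
Qed.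

Lemma cand k j : 1 < k -> j <= k - 1 -> 2 ^ k.+1 - 1 = 2 ^ j %[mod k] ->
  [/\ 0 < 2 ^ k.+1 - 1 - 2 ^ j, k %| 2 ^ k.+1 - 1 - 2 ^ j &
      binsum (2 ^ k.+1 - 1 - 2 ^ j) = k].
Proof.
move=> Hk Hj Hm.
have Hjk : 2 ^ j < 2 ^ k by rewrite ltn_exp2l //; nlia.
have Hpos : 0 < 2 ^ k by rewrite expn_gt0.
have E : 2 ^ k.+1 = 2 * 2 ^ k by rewrite expnS.
split.
- rewrite E; nlia.
- by rewrite -eqn_mod_dvd; [apply/eqP | rewrite E; nlia].
- rewrite (@binsumE k.+1); last by rewrite E; nlia.
  have Hb := @bs_compl k.+1 (2 ^ j).
  rewrite bs_pow in Hb; last by nlia.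
  have : 2 ^ j < 2 ^ k.+1 by rewrite E; nlia.
  move/Hb; nlia.
Qed.

Lemma charb k b : b < 2 ^ k.+1 -> binsum b = k ->
  exists i, i <= k /\ b = 2 ^ k.+1 - 1 - 2 ^ i.
Proof.
move=> Hb; rewrite (@binsumE k.+1 b Hb) => Hs.
have Hc := @bs_compl k.+1 b Hb; rewrite Hs in Hc.
have Hc1 : bs k.+1 (2 ^ k.+1 - 1 - b) = 1 by nlia.
have Hlt : 2 ^ k.+1 - 1 - b < 2 ^ k.+1 by nlia.
have [_ /(_ Hc1) [i Hi]] := @bs_small k.+1 _ Hlt.
exists i; split.
  by rewrite -ltnS -(@ltn_exp2l 2) // -Hi.
rewrite -Hi; nlia.
Qed.

Lemma low k b : binsum b = k -> 2 ^ k <= b.+1.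
Proof. by move=> <-; apply: bs_low. Qed.
Arguments inC1 {k}. Arguments cand {k j}. Arguments low {k b}. Arguments no_div {k}. Arguments per {k t j0 i}. Arguments charb {k b}.

Theorem mainTheorem5 :
  (forall k : nat, 1 < k -> inC 1 k ->
     (forall a, is_a k a -> 2 ^ k - 1 < a < 2 ^ k.+1 - 1) /\
     (forall t j0 : nat, is_order2 k t -> j0 < t ->
        2 ^ k.+1 - 1 = 2 ^ j0 %[mod k] ->
        let s := (k - 1 - j0) %/ t in
        let j1 := j0 + s * t in
        is_a k (2 ^ k.+1 - 1 - 2 ^ j1)))
  /\
  (forall eps : rat, (0 < eps)%R ->
     exists N : nat, forall k a : nat, N <= k -> 1 < k -> inC 1 k -> is_a k a ->
       ((a%:R / k%:R) / (2 ^ k)%:R < eps)%R).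
Proof.
have partA : forall k, 1 < k -> inC 1 k -> forall a, is_a k a -> 2 ^ k - 1 < a < 2 ^ k.+1 - 1.
  move=> k Hk HC a [Ha Hda Hsa Hmin].
  have [Ho _ [j [Hj Hm]]] := inC1 HC.
  have [c0 cd cs] := cand Hk Hj Hm.
  have Hle := Hmin _ c0 cd cs.
  have Hlo := low Hsa.
  have Hne : a <> 2 ^ k - 1.
    by move=> E; move: (no_div Ho Hk); rewrite -E Hda.
  have Hpj : 0 < 2 ^ j by rewrite expn_gt0.
  have Hpk : 0 < 2 ^ k by rewrite expn_gt0.
  apply/andP; split; nlia.
split.
  move=> k Hk HC; split; first exact: partA.
  move=> t j0 Ho Hj0 H0 s j1.
  have Ej1 : j1 = j0 + s * t by [].
  have Es : s = (k - 1 - j0) %/ t by [].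
  clearbody j1 s.
  have [Hodd _ [j [Hj Hm]]] := inC1 HC.
  have Hjj : j %% t = j0 by apply: (per Hodd Ho Hj0); rewrite -Hm H0.
  have Hj0k : j0 <= k - 1 by rewrite -Hjj; apply: leq_trans (leq_mod _ _) Hj.
  have [t0 Ht _] := Ho.
  have Hst : s * t <= k - 1 - j0 by rewrite Es; apply: leq_trunc_div.
  have Hj1 : j1 <= k - 1 by rewrite Ej1; nlia.
  have Hm1 : 2 ^ k.+1 - 1 = 2 ^ j1 %[mod k] by rewrite H0 Ej1 (@pow_shift k t _ _ Ht).
  have [c0 cd cs] := cand Hk Hj1 Hm1.
  split => // b b0 bd bs'.
  case: (leqP (2 ^ k.+1) b) => Hb; first nlia.
  have [i [Hik Ei]] := charb Hb bs'.
  have Hpk : 0 < 2 ^ k by rewrite expn_gt0.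
  have E2 : 2 ^ k.+1 = 2 * 2 ^ k by rewrite expnS.
  have Hik' : i <= k - 1.
    case: (ltnP i k) => H; first nlia.
    have Eik : i = k by apply/eqP; rewrite eqn_leq Hik H.
    have Eb : b = 2 ^ k - 1 by rewrite Ei Eik; nlia.
    by move: (no_div Hodd Hk); rewrite -Eb bd.
  have Hpi : 2 ^ i <= 2 ^ k by apply: leq_pexp2l => //; nlia.
  have Hmi : 2 ^ i = 2 ^ j0 %[mod k].
    rewrite -H0.
    have Eb : 2 ^ k.+1 - 1 = b + 2 ^ i by rewrite Ei; nlia.
    rewrite Eb -modnDml; move: bd; rewrite /dvdn => /eqP ->; by rewrite add0n.
  have Hii := per Hodd Ho Hj0 Hmi.
  have Hq : i %/ t <= s.
    rewrite Es leq_divRL //; have := divn_eq i t; rewrite Hii; move=> Hd; move: (i %/ t * t) Hd => q Hd; nlia.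
  have Hq2 := leq_mul Hq (leqnn t).
  have Hij : i <= j1.
    have := divn_eq i t; rewrite Hii Ej1 => Hd; move: (i %/ t * t) (s * t) Hd Hq2 => q st Hd Hq2; nlia.
  have Hp2 : 2 ^ i <= 2 ^ j1 by apply: leq_pexp2l.
  rewrite Ei; nlia.
move=> eps He.
exists (Num.bound (2 / eps)%R).+1 => k a HN Hk HC Ha.
have /andP [_ Hlt] := partA k Hk HC a Ha.
have Ha2 : a < 2 * 2 ^ k by rewrite -expnS; apply: leq_trans Hlt (leq_subr _ _).
have Hb : (2 / eps < k%:R)%R.
  apply: lt_le_trans (archi_boundP _) _; first by rewrite divr_ge0 // ltW.
  by rewrite ler_nat ltnW.
have Hk0 : (0 < k%:R :> rat)%R by rewrite ltr0n; nlia.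
have H2 : (0 < (2 ^ k)%:R :> rat)%R by rewrite ltr0n expn_gt0.
rewrite ltr_pdivrMr // ltr_pdivrMr //.
have : (a%:R < (2 * 2 ^ k)%:R :> rat)%R by rewrite ltr_nat.
move/lt_le_trans; apply.
rewrite natrM mulrAC ler_pM2r //.
rewrite ltr_pdivrMr // in Hb.
by rewrite mulrC ltW.
Qed.
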